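(* Under TLMP and stochastic rolling-window dispatch as described in the context, for all realizations of stochastic demands and probabilistic load forecasts, it is optimal for a price-taking ESR $i$ to bid with its true benefit/cost curves and true operational parameters; that is, the truthful bidding parameter $\boldsymbol\theta_i^*$ maximizes $\Pi_i^{TLMP}(\boldsymbol\theta_i)$ over bidding parameters $\boldsymbol\theta_i$.
   Context: Single-bus market with $N$ ESRs over horizon $\mathscr H=\{1,\dots,T\}$. In each interval $t$ the operator solves a scenario-based stochastic dispatch problem over window $\{t,\dots,t+W-1\}$ (minimizing interval-$t$ bid cost plus probability-weighted bid cost over $K$ forecast demand scenarios, subject to power balance with realized demand $d_t$ and forecast scenario demands, SOC transitions $E_{it}-E_{i(t-1)}=\xi^C_ig^C_{it}-g^D_{it}/\xi^D_i$, SOC, power and ramping limits, with initial conditions given by the previously realized dispatch), using the bids submitted by the ESRs; the interval-$t$ solution is the realized dispatch. The TLMP of ESR $i$ in interval $t$ is $\pi_{it}^{TLMP\text{-}C}=\lambda^*_t-\xi_i^{C}\phi^*_{it}-\Delta_{it}^{C*}$ (charging) and $\pi_{it}^{TLMP\text{-}D}=\lambda^*_t-\phi^*_{it}/\xi_i^{D}+\Delta_{it}^{D*}$ (discharging), where $\lambda_t^*$ is the optimal multiplier of the interval-$t$ power balance, $\phi^*_{it}$ that of ESR $i$'s interval-$t$ SOC transition equation, and $\Delta_{it}^{C*}=-(\bar{\mu}_{it}^{C*}-\underline{\mu}_{it}^{C*})+\sum_{k=1}^K(\bar{\mu}_{i(t+1)k}^{C*}-\underline{\mu}_{i(t+1)k}^{C*})$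 with $\bar\mu_{it},\underline\mu_{it}$ the multipliers of the ramp constraints between $t-1$ and $t$ and $\bar\mu_{i(t+1)k},\underline\mu_{i(t+1)k}$ those between $t$ and $t+1$ in scenario $k$ ($\Delta^{D*}_{it}$ analogous). ESR $i$ submits bids parameterized by $\boldsymbol\theta_i=(c_i^{D},c_i^{C},\bar{r}_i^{D},\bar{r}_i^{C},\underline{r}_i^{D},\underline{r}_i^{C},\bar{E}_i,\underline{E}_i,\bar{g}_i^{D},\bar{g}_i^{C},\underline{g}_i^{D},\underline{g}_i^{C})$ (bid-in marginal costs, ramp limits, SOC limits, power limits), giving bid curves $f^C_{it}(\cdot|\boldsymbol\theta_i),f^D_{it}(\cdot|\boldsymbol\theta_i)$; $\boldsymbol\theta_i^*$ denotes the true parameters, and the true benefit/cost curves are $q^C_{it}=f^C_{it}(\cdot|\boldsymbol\theta_i^* )$, $q^D_{it}=f^D_{it}(\cdot|\boldsymbol\theta_i^* )$. Let $g^{C*}_{it}(\boldsymbol\theta_i),g^{D*}_{it}(\boldsymbol\theta_i)$ be the resulting dispatch. Price-taking: the ESR treats the TLMP sequence as fixed (independent of $\boldsymbol\theta_i$) and evaluates the profit $\Pi_i^{TLMP}(\boldsymbol\theta_i)=\sum_{t=1}^T\big(\pi_{it}^{TLMP\text{-}D}g_{it}^{D*}(\boldsymbol\theta_i)-\pi_{it}^{TLMP\text{-}C}g_{it}^{C*}(\boldsymbol\theta_i)-q_{it}^{D}(g^{D*}_{it}(\boldsymbol\theta_i))+q_{it}^{C}(g^{C*}_{it}(\boldsymbol\theta_i))\big)$;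 the ESR requires its dispatch to lie in its true feasible operating region (true ramp, SOC and power limits), since otherwise it cannot follow the dispatch. *)

(* Defs.v *)
From HB Require Import structures.
From mathcomp Require Import all_boot all_order all_algebra.
Set Implicit Arguments. Unset Strict Implicit. Unset Printing Implicit Defensive.
Import Order.TTheory GRing.Theory Num.Theory.
Local Open Scope ring_scope.

(* Kinds of inequality constraints of an ESR at one node (written "<= 0"):
   ramp-up/down of charging and discharging, SOC upper/lower, power upper/lower. *)
Inductive ineq := RCu | RCl | RDu | RDl | SEu | SEl | PCu | PCl | PDu | PDl.
Definition ineqs : seq ineq := [:: RCu; RCl; RDu; RDl; SEu; SEl; PCu; PCl; PDu; PDl].

Section Market.
Variable R : realFieldType.

Record bid := Bid {
  cD : R; cC : R; rDu : R; rCu : R; rDl : R; rCl : R;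
  Eu : R; El : R; gDu : R; gCu : R; gDl : R; gCl : R }.

Definition fD (b : bid) (g : R) : R := cD b * g.
Definition fC (b : bid) (g : R) : R := cC b * g.

Definition ineq_val (b : bid) (q : ineq) (gC gD E gCp gDp : R) : R :=
  match q with
  | RCu => gC - gCp - rCu b
  | RCl => gCp - gC - rCl b
  | RDu => gD - gDp - rDu b
  | RDl => gDp - gD - rDl b
  | SEu => E - Eu b
  | SEl => El b - E
  | PCu => gC - gCu b
  | PCl => gCl b - gC
  | PDu => gD - gDu b
  | PDl => gDl b - gD
  end.

Definition soc_val (xc xd E Ep gC gD : R) : R := E - Ep - xc * gC + gD / xd.

Variables N K : nat.

(* decision variables of the interval-t window problem: interval t (index 0)
   and scenario k, interval t+s (1 <= s <= W-1) *)
Record wvar := WVar {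
  gC0 : 'I_N -> R; gD0 : 'I_N -> R; E0 : 'I_N -> R;
  gCs : 'I_N -> 'I_K -> nat -> R; gDs : 'I_N -> 'I_K -> nat -> R;
  Es : 'I_N -> 'I_K -> nat -> R }.

(* multipliers: power balances, SOC transitions, inequality constraints *)
Record wmult := WMult {
  lam0 : R; lams : 'I_K -> nat -> R;
  phi0 : 'I_N -> R; phis : 'I_N -> 'I_K -> nat -> R;
  mu0 : ineq -> 'I_N -> R; mus : ineq -> 'I_N -> 'I_K -> nat -> R }.

Record wdata := WData {
  bids : 'I_N -> bid; xiC : 'I_N -> R; xiD : 'I_N -> R; win : nat;
  dem : R;                    (* realized demand d_t *)
  fdem : 'I_K -> nat -> R;    (* forecast demand of scenario k at t+s *)
  prob : 'I_K -> R;
  gCp : 'I_N -> R; gDp : 'I_N -> R; Ep : 'I_N -> R (* realized at t-1 *) }.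

Definition ngC (x : wvar) i k (s : nat) := if s == 0%N then gC0 x i else gCs x i k s.
Definition ngD (x : wvar) i k (s : nat) := if s == 0%N then gD0 x i else gDs x i k s.
Definition nE (x : wvar) i k (s : nat) := if s == 0%N then E0 x i else Es x i k s.

Definition obj (D : wdata) (x : wvar) : R :=
  \sum_(i < N) (fD (bids D i) (gD0 x i) - fC (bids D i) (gC0 x i))
  + \sum_(k < K) prob D k * \sum_(1 <= s < win D)
       \sum_(i < N) (fD (bids D i) (gDs x i k s) - fC (bids D i) (gCs x i k s)).

Definition bal0 (D : wdata) (x : wvar) : R :=
  dem D - \sum_(i < N) (gD0 x i - gC0 x i).
Definition bals (D : wdata) (x : wvar) k s : R :=
  fdem D k s - \sum_(i < N) (gDs x i k s - gCs x i k s).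
Definition soc0 (D : wdata) (x : wvar) i : R :=
  soc_val (xiC D i) (xiD D i) (E0 x i) (Ep D i) (gC0 x i) (gD0 x i).
Definition socs (D : wdata) (x : wvar) i k s : R :=
  soc_val (xiC D i) (xiD D i) (Es x i k s) (nE x i k s.-1) (gCs x i k s) (gDs x i k s).
Definition con0 (D : wdata) (x : wvar) q i : R :=
  ineq_val (bids D i) q (gC0 x i) (gD0 x i) (E0 x i) (gCp D i) (gDp D i).
Definition cons (D : wdata) (x : wvar) q i k s : R :=
  ineq_val (bids D i) q (gCs x i k s) (gDs x i k s) (Es x i k s)
           (ngC x i k s.-1) (ngD x i k s.-1).

Definition feasible (D : wdata) (x : wvar) : Prop :=
  bal0 D x = 0 /\
  (forall k s, (1 <= s < win D)%N -> bals D x k s = 0) /\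
  (forall i, soc0 D x i = 0) /\
  (forall i k s, (1 <= s < win D)%N -> socs D x i k s = 0) /\
  (forall q i, con0 D x q i <= 0) /\
  (forall q i k s, (1 <= s < win D)%N -> cons D x q i k s <= 0).

Definition optimal (D : wdata) (x : wvar) : Prop :=
  feasible D x /\ forall x', feasible D x' -> obj D x <= obj D x'.

Definition lagr (D : wdata) (x : wvar) (y : wmult) : R :=
  obj D x + lam0 y * bal0 D x
  + \sum_(k < K) \sum_(1 <= s < win D) lams y k s * bals D x k s
  + \sum_(i < N) phi0 y i * soc0 D x i
  + \sum_(i < N) \sum_(k < K) \sum_(1 <= s < win D) phis y i k s * socs D x i k s
  + \sum_(q <- ineqs) (\sum_(i < N) mu0 y q i * con0 D x q i
      + \sum_(i < N) \sum_(k < K) \sum_(1 <= s < win D) mus y q i k s * cons D x q i k s).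

Definition dual_feas (D : wdata) (y : wmult) : Prop :=
  (forall q i, 0 <= mu0 y q i) /\
  (forall q i k s, (1 <= s < win D)%N -> 0 <= mus y q i k s).

(* (x, y) is an optimal primal-dual pair: saddle point of the Lagrangian *)
Definition saddle (D : wdata) (x : wvar) (y : wmult) : Prop :=
  [/\ dual_feas D y,
      forall x', lagr D x y <= lagr D x' y &
      forall y', dual_feas D y' -> lagr D x y' <= lagr D x y].

Definition realgC (gCi : 'I_N -> R) (sol : nat -> wvar) (t : nat) i : R :=
  if t == 0%N then gCi i else gC0 (sol t) i.
Definition realgD (gDi : 'I_N -> R) (sol : nat -> wvar) (t : nat) i : R :=
  if t == 0%N then gDi i else gD0 (sol t) i.
Definition realE (Ei : 'I_N -> R) (sol : nat -> wvar) (t : nat) i : R :=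
  if t == 0%N then Ei i else E0 (sol t) i.

Definition wdata_at (Th : 'I_N -> bid) (xc xd : 'I_N -> R) (W : nat)
  (d : nat -> R) (dh : nat -> 'I_K -> nat -> R) (pr : nat -> 'I_K -> R)
  (gCi gDi Ei : 'I_N -> R) (sol : nat -> wvar) (t : nat) : wdata :=
  WData Th xc xd W (d t) (dh t) (pr t)
    (realgC gCi sol t.-1) (realgD gDi sol t.-1) (realE Ei sol t.-1).

Definition rolling_opt Th xc xd W d dh pr gCi gDi Ei (T : nat) (sol : nat -> wvar) :=
  forall t, (1 <= t <= T)%N -> optimal (wdata_at Th xc xd W d dh pr gCi gDi Ei sol t) (sol t).

Definition rolling_saddle Th xc xd W d dh pr gCi gDi Ei (T : nat)
  (sol : nat -> wvar) (mult : nat -> wmult) :=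
  forall t, (1 <= t <= T)%N ->
    saddle (wdata_at Th xc xd W d dh pr gCi gDi Ei sol t) (sol t) (mult t).

(* Delta^C, Delta^D (scenario ramp terms only exist if W >= 2) *)
Definition DeltaC (W : nat) (y : wmult) i : R :=
  - (mu0 y RCu i - mu0 y RCl i)
  + (if (1 < W)%N then \sum_(k < K) (mus y RCu i k 1 - mus y RCl i k 1) else 0).
Definition DeltaD (W : nat) (y : wmult) i : R :=
  - (mu0 y RDu i - mu0 y RDl i)
  + (if (1 < W)%N then \sum_(k < K) (mus y RDu i k 1 - mus y RDl i k 1) else 0).

Definition tlmpC (xc : 'I_N -> R) (W : nat) (y : wmult) i : R :=
  lam0 y - xc i * phi0 y i - DeltaC W y i.
Definition tlmpD (xd : 'I_N -> R) (W : nat) (y : wmult) i : R :=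
  lam0 y - phi0 y i / xd i + DeltaD W y i.

Definition upd (Th : 'I_N -> bid) (i : 'I_N) (b : bid) : 'I_N -> bid :=
  fun j => if j == i then b else Th j.

End Market.

Definition truly_feasible (R : realFieldType) (b : bid R) (xc xd gCi gDi Ei : R)
  (T : nat) (gC gD E : nat -> R) : Prop :=
  let pC t := if t == 0%N then gCi else gC t in
  let pD t := if t == 0%N then gDi else gD t in
  let pE t := if t == 0%N then Ei else E t in
  forall t, (1 <= t <= T)%N ->
    (forall q, ineq_val b q (gC t) (gD t) (E t) (pC t.-1) (pD t.-1) <= 0)
    /\ soc_val xc xd (E t) (pE t.-1) (gC t) (gD t) = 0.

(* Pi_i^{TLMP}, with true curves q^D = f^D at theta_star, q^C = f^C at theta_star *)
Definition profit (R : realFieldType) (bstar : bid R) (piC piD : nat -> R) (T : nat)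
  (gC gD : nat -> R) : R :=
  \sum_(1 <= t < T.+1)
    (piD t * gD t - piC t * gC t - fD bstar (gD t) + fC bstar (gC t)).

(* Main.v *)
Require Import Defs.
From HB Require Import structures.
From mathcomp Require Import all_boot all_order all_algebra ring lra.
Import Order.TTheory GRing.Theory Num.Theory.
Local Open Scope ring_scope.

Section Helpers.
Variables (R : realFieldType) (N K : nat).

Lemma sum_upd (F G : 'I_N -> R) (i : 'I_N) :
  (forall j, j != i -> F j = G j) -> \sum_j F j = \sum_j G j + (F i - G i).
Proof.
move=> H; rewrite (bigD1 i) //= [in RHS](bigD1 i) //=.
have -> : \sum_(j < N | j != i) F j = \sum_(j < N | j != i) G j.
  by apply: eq_bigr => j /H.
ring.
Qed.

Definition pert (x : wvar R N K) (i : 'I_N) (a b : R) : wvar R N K :=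
  WVar (fun j => if j == i then a else gC0 x j) (fun j => if j == i then b else gD0 x j)
    (E0 x) (gCs x) (gDs x) (Es x).

Definition cq (q : ineq) : R := match q with RCu => -1 | RCl => 1 | _ => 0 end.
Definition dq (q : ineq) : R := match q with RDu => -1 | RDl => 1 | _ => 0 end.
Definition ec (q : ineq) : R := match q with RCu => 1 | RCl => -1 | PCu => 1 | PCl => -1 | _ => 0 end.
Definition ed (q : ineq) : R := match q with RDu => 1 | RDl => -1 | PDu => 1 | PDl => -1 | _ => 0 end.

Lemma cons_diff D x i a b q k :
  cons D (pert x i a b) q i k 1 - cons D x q i k 1
  = cq q * (a - gC0 x i) + dq q * (b - gD0 x i).
Proof. by case: q; rewrite /cons /ngC /ngD /= ?eqxx /=; ring. Qed.

Lemma con0_diff D x i a b q :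
  con0 D (pert x i a b) q i - con0 D x q i
  = ec q * (a - gC0 x i) + ed q * (b - gD0 x i).
Proof. by case: q; rewrite /con0 /= ?eqxx /=; ring. Qed.

Lemma scen_diff D x y i a b q :
  \sum_(j < N) \sum_(k < K) \sum_(1 <= s < win D) mus y q j k s * cons D (pert x i a b) q j k s
  = \sum_(j < N) \sum_(k < K) \sum_(1 <= s < win D) mus y q j k s * cons D x q j k s
   + (if (1 < win D)%N then (\sum_(k < K) mus y q i k 1) * (cq q * (a - gC0 x i) + dq q * (b - gD0 x i)) else 0).
Proof.
rewrite (@sum_upd _ (fun j => \sum_(k < K) \sum_(1 <= s < win D) mus y q j k s * cons D x q j k s) i).
  congr (_ + _); rewrite -sumrB.
  case: ltnP => hW.
    rewrite mulr_suml; apply: eq_bigr => k _.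
    rewrite (big_ltn hW) [X in _ - X](big_ltn hW).
    have -> : \sum_(2 <= s < win D) mus y q i k s * cons D (pert x i a b) q i k s
            = \sum_(2 <= s < win D) mus y q i k s * cons D x q i k s.
      apply: eq_big_nat => s /andP [hs _].
      have hs1 : (s.-1 == 0)%N = false by case: s hs => [|[|s]].
      by rewrite /cons /ngC /ngD /= hs1.
    rewrite -(cons_diff D x i a b q k); ring.
  by rewrite big1 // => k _; rewrite !big_geq // subrr.
move=> j hj; apply: eq_bigr => k _; apply: eq_bigr => s _.
by rewrite /cons /ngC /ngD /= (negbTE hj).
Qed.


Lemma lagr_pert D x y i a b :
  lagr D (pert x i a b) y = lagr D x y
  + (a - gC0 x i) * (- cC (bids D i) + lam0 y - xiC D i * phi0 y i
       + (mu0 y RCu i - mu0 y RCl i) + (mu0 y PCu i - mu0 y PCl i)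
       - (if (1 < win D)%N then \sum_(k < K) (mus y RCu i k 1 - mus y RCl i k 1) else 0))
  + (b - gD0 x i) * (cD (bids D i) - lam0 y + phi0 y i / xiD D i
       + (mu0 y RDu i - mu0 y RDl i) + (mu0 y PDu i - mu0 y PDl i)
       - (if (1 < win D)%N then \sum_(k < K) (mus y RDu i k 1 - mus y RDl i k 1) else 0)).
Proof.
set x' := pert x i a b.
have Eobj : obj D x' = obj D x + (cD (bids D i) * (b - gD0 x i) - cC (bids D i) * (a - gC0 x i)).
  rewrite /obj (@sum_upd _ (fun j => fD (bids D j) (gD0 x j) - fC (bids D j) (gC0 x j)) i).
    rewrite /x' /pert /fD /fC /= eqxx; ring.
  by move=> j hj; rewrite /x' /pert /= (negbTE hj).
have Ebal : bal0 D x' = bal0 D x - ((b - gD0 x i) - (a - gC0 x i)).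
  rewrite /bal0 (@sum_upd _ (fun j => gD0 x j - gC0 x j) i).
    rewrite /x' /pert /= eqxx; ring.
  by move=> j hj; rewrite /x' /pert /= (negbTE hj).
have Esoc : \sum_(j < N) phi0 y j * soc0 D x' j = \sum_(j < N) phi0 y j * soc0 D x j
    + phi0 y i * (- xiC D i * (a - gC0 x i) + (b - gD0 x i) / xiD D i).
  rewrite (@sum_upd _ (fun j => phi0 y j * soc0 D x j) i).
    rewrite /x' /pert /soc0 /soc_val /= eqxx; rewrite !mulrBl; ring.
  by move=> j hj; rewrite /x' /pert /soc0 /= (negbTE hj).
have Ecq : forall q, \sum_(j < N) mu0 y q j * con0 D x' q j = \sum_(j < N) mu0 y q j * con0 D x q j
    + mu0 y q i * (ec q * (a - gC0 x i) + ed q * (b - gD0 x i)).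
  move=> q; rewrite (@sum_upd _ (fun j => mu0 y q j * con0 D x q j) i).
    by rewrite -(con0_diff D x i a b q) mulrBr.
  by move=> j hj; rewrite /x' /pert /con0 /= (negbTE hj).
have Eq : \sum_(q <- ineqs) (\sum_(j < N) mu0 y q j * con0 D x' q j
      + \sum_(j < N) \sum_(k < K) \sum_(1 <= s < win D) mus y q j k s * cons D x' q j k s)
    = \sum_(q <- ineqs) (\sum_(j < N) mu0 y q j * con0 D x q j
      + \sum_(j < N) \sum_(k < K) \sum_(1 <= s < win D) mus y q j k s * cons D x q j k s)
    + \sum_(q <- ineqs) (mu0 y q i * (ec q * (a - gC0 x i) + ed q * (b - gD0 x i))
       + (if (1 < win D)%N then (\sum_(k < K) mus y q i k 1) * (cq q * (a - gC0 x i) + dq q * (b - gD0 x i)) else 0)).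
  rewrite -big_split /=; apply: eq_bigr => q _.
  rewrite Ecq /x' scen_diff. by rewrite addrACA.
rewrite /lagr Eobj Ebal Esoc Eq.
have -> : \sum_(k < K) \sum_(1 <= s < win D) lams y k s * bals D x' k s
        = \sum_(k < K) \sum_(1 <= s < win D) lams y k s * bals D x k s by [].
have -> : \sum_(j < N) \sum_(k < K) \sum_(1 <= s < win D) phis y j k s * socs D x' j k s
        = \sum_(j < N) \sum_(k < K) \sum_(1 <= s < win D) phis y j k s * socs D x j k s by [].
rewrite /ineqs !big_cons !big_nil; cbn [ec ed cq dq].
case: (1 < win D)%N; last by ring.
rewrite !sumrB; ring.
Qed.

Definition inum (q : ineq) : nat :=
  match q with RCu => 0 | RCl => 1 | RDu => 2 | RDl => 3 | SEu => 4 | SEl => 5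
  | PCu => 6 | PCl => 7 | PDu => 8 | PDl => 9 end.

Lemma inum_inj q q0 : inum q = inum q0 -> q = q0.
Proof. by case: q; case: q0. Qed.

Definition setmu (y : wmult R N K) (q0 : ineq) (i : 'I_N) (m : R) : wmult R N K :=
  WMult (lam0 y) (lams y) (phi0 y) (phis y)
    (fun q j => if (inum q == inum q0) && (j == i) then m else mu0 y q j) (mus y).

Lemma lagr_setmu D x y q0 i m :
  lagr D x (setmu y q0 i m) = lagr D x y + (m - mu0 y q0 i) * con0 D x q0 i.
Proof.
have Eq : forall q, \sum_(j < N) mu0 (setmu y q0 i m) q j * con0 D x q j
   = \sum_(j < N) mu0 y q j * con0 D x q j
     + (if inum q == inum q0 then (m - mu0 y q0 i) * con0 D x q0 i else 0).
  move=> q; rewrite (@sum_upd _ (fun j => mu0 y q j * con0 D x q j) i).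
    congr (_ + _); rewrite /setmu /= eqxx andbT.
    case: eqP => [/inum_inj -> |]; first by rewrite mulrBl.
    by rewrite subrr.
  by move=> j hj; rewrite /setmu /= (negbTE hj) andbF.
rewrite /lagr.
have -> : \sum_(q <- ineqs) (\sum_(j < N) mu0 (setmu y q0 i m) q j * con0 D x q j
      + \sum_(j < N) \sum_(k < K) \sum_(1 <= s < win D) mus (setmu y q0 i m) q j k s * cons D x q j k s)
    = \sum_(q <- ineqs) (\sum_(j < N) mu0 y q j * con0 D x q j
      + \sum_(j < N) \sum_(k < K) \sum_(1 <= s < win D) mus y q j k s * cons D x q j k s)
    + \sum_(q <- ineqs) (if inum q == inum q0 then (m - mu0 y q0 i) * con0 D x q0 i else 0).
  rewrite -big_split /=; apply: eq_bigr => q _.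
  rewrite Eq; by rewrite addrAC.
have E2 : \sum_(q <- ineqs) (if inum q == inum q0 then (m - mu0 y q0 i) * con0 D x q0 i else 0)
   = (m - mu0 y q0 i) * con0 D x q0 i.
  by clear Eq; case: q0; rewrite /ineqs !big_cons !big_nil /= ?addr0 ?add0r.
rewrite E2; by rewrite addrA.
Qed.
End Helpers.
Arguments pert {R N K}.
Arguments setmu {R N K}.

Theorem theorem3 (R : realFieldType) (N K T W : nat) (i : 'I_N)
  (Th : 'I_N -> bid R) (thstar th : bid R) (xc xd : 'I_N -> R)
  (d : nat -> R) (dh : nat -> 'I_K -> nat -> R) (pr : nat -> 'I_K -> R)
  (gCi gDi Ei : 'I_N -> R)
  (sol0 : nat -> wvar R N K) (mult0 : nat -> wmult R N K)
  (sol1 : nat -> wvar R N K) :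
  (0 < W)%N ->
  (forall j, 0 < xc j) -> (forall j, 0 < xd j) ->
  (forall t k, 0 <= pr t k) -> (forall t, \sum_(k < K) pr t k = 1) ->
  (* truthful bid theta_i^*: realized dispatch sol0 with optimal multipliers mult0 *)
  rolling_saddle (upd Th i thstar) xc xd W d dh pr gCi gDi Ei T sol0 mult0 ->
  (* arbitrary bid theta_i: realized dispatch sol1 *)
  rolling_opt (upd Th i th) xc xd W d dh pr gCi gDi Ei T sol1 ->
  (* the resulting dispatch of ESR i lies in its true feasible operating region *)
  truly_feasible thstar (xc i) (xd i) (gCi i) (gDi i) (Ei i) T
    (fun t => gC0 (sol1 t) i) (fun t => gD0 (sol1 t) i) (fun t => E0 (sol1 t) i) ->
  profit thstar (fun t => tlmpC xc W (mult0 t) i) (fun t => tlmpD xd W (mult0 t) i) T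
    (fun t => gC0 (sol1 t) i) (fun t => gD0 (sol1 t) i)
  <= profit thstar (fun t => tlmpC xc W (mult0 t) i) (fun t => tlmpD xd W (mult0 t) i) T
    (fun t => gC0 (sol0 t) i) (fun t => gD0 (sol0 t) i).
Proof.
move=> _ _ _ _ _ Hs _ Htf.
rewrite /profit; apply: ler_sum_nat => t /andP [t1 tT].
have tr : (1 <= t <= T)%N by rewrite t1 -ltnS.
have [Hdf Hmin Hmax] := Hs t tr.
have [Hf _] := Htf t tr.
set D := wdata_at (upd Th i thstar) xc xd W d dh pr gCi gDi Ei sol0 t in Hdf Hmin Hmax.
set x := sol0 t in Hmin Hmax *.
set y := mult0 t in Hdf Hmin Hmax *.
set a := gC0 (sol1 t) i in Hf *.
set b := gD0 (sol1 t) i in Hf *.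
have bi : bids D i = thstar by rewrite /D /wdata_at /= /upd eqxx.
have HL := Hmin (pert x i a b).
rewrite lagr_pert bi in HL.
have {HL} HL : 0 <= (a - gC0 x i) * (- cC thstar + lam0 y - xc i * phi0 y i
       + (mu0 y RCu i - mu0 y RCl i) + (mu0 y PCu i - mu0 y PCl i)
       - (if (1 < W)%N then \sum_(k < K) (mus y RCu i k 1 - mus y RCl i k 1) else 0))
  + (b - gD0 x i) * (cD thstar - lam0 y + phi0 y i / xd i
       + (mu0 y RDu i - mu0 y RDl i) + (mu0 y PDu i - mu0 y PDl i)
       - (if (1 < W)%N then \sum_(k < K) (mus y RDu i k 1 - mus y RDl i k 1) else 0)).
  by move: HL; rewrite -addrA lerDl.
have slack : forall q, 0 <= mu0 y q i * con0 D x q i.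
  move=> q; have := Hmax (setmu y q i 0).
  rewrite lagr_setmu sub0r mulNr gerDl oppr_le0; apply.
  case: Hdf => H1 H2; split=> // q' j; rewrite /setmu /=.
  by case: ifP.
have c0 : forall q, con0 D x q i = ineq_val thstar q (gC0 x i) (gD0 x i) (E0 x i)
    (gCp D i) (gDp D i) by move=> q; rewrite /con0 bi.
have s1 := slack PCu; have s2 := slack PCl; have s3 := slack PDu; have s4 := slack PDl.
rewrite !c0 /= in s1 s2 s3 s4.
have f1 := Hf PCu; have f2 := Hf PCl; have f3 := Hf PDu; have f4 := Hf PDl.
rewrite /= in f1 f2 f3 f4.
have m1 : mu0 y PCu i * (a - gCu thstar) <= 0.
  by apply: mulr_ge0_le0 => //; case: Hdf.
have m2 : mu0 y PCl i * (gCl thstar - a) <= 0.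
  by apply: mulr_ge0_le0 => //; case: Hdf.
have m3 : mu0 y PDu i * (b - gDu thstar) <= 0.
  by apply: mulr_ge0_le0 => //; case: Hdf.
have m4 : mu0 y PDl i * (gDl thstar - b) <= 0.
  by apply: mulr_ge0_le0 => //; case: Hdf.
rewrite -subr_ge0.
have -> : tlmpD xd W y i * gD0 x i - tlmpC xc W y i * gC0 x i - fD thstar (gD0 x i) + fC thstar (gC0 x i)
  - (tlmpD xd W y i * b - tlmpC xc W y i * a - fD thstar b + fC thstar a)
  = ((a - gC0 x i) * (- cC thstar + lam0 y - xc i * phi0 y i
       + (mu0 y RCu i - mu0 y RCl i) + (mu0 y PCu i - mu0 y PCl i)
       - (if (1 < W)%N then \sum_(k < K) (mus y RCu i k 1 - mus y RCl i k 1) else 0))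
  + (b - gD0 x i) * (cD thstar - lam0 y + phi0 y i / xd i
       + (mu0 y RDu i - mu0 y RDl i) + (mu0 y PDu i - mu0 y PDl i)
       - (if (1 < W)%N then \sum_(k < K) (mus y RDu i k 1 - mus y RDl i k 1) else 0)))
  + (mu0 y PCu i * (gC0 x i - gCu thstar) - mu0 y PCu i * (a - gCu thstar))
  + (mu0 y PCl i * (gCl thstar - gC0 x i) - mu0 y PCl i * (gCl thstar - a))
  + (mu0 y PDu i * (gD0 x i - gDu thstar) - mu0 y PDu i * (b - gDu thstar))
  + (mu0 y PDl i * (gDl thstar - gD0 x i) - mu0 y PDl i * (gDl thstar - b)).
  rewrite /tlmpC /tlmpD /DeltaC /DeltaD /fD /fC; ring.
have p1 : 0 <= mu0 y PCu i * (gC0 x i - gCu thstar) - mu0 y PCu i * (a - gCu thstar).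
  by rewrite subr_ge0 (le_trans m1).
have p2 : 0 <= mu0 y PCl i * (gCl thstar - gC0 x i) - mu0 y PCl i * (gCl thstar - a).
  by rewrite subr_ge0 (le_trans m2).
have p3 : 0 <= mu0 y PDu i * (gD0 x i - gDu thstar) - mu0 y PDu i * (b - gDu thstar).
  by rewrite subr_ge0 (le_trans m3).
have p4 : 0 <= mu0 y PDl i * (gDl thstar - gD0 x i) - mu0 y PDl i * (gDl thstar - b).
  by rewrite subr_ge0 (le_trans m4).
by do 4 (apply: addr_ge0 => //).
Qed.
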